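(* Let $K$ be a field of characteristic zero, $(\mathfrak{g},s)$ a finite-dimensional solvable Lie algebra with filtration over $K$, $f\in\mathfrak{g}^*$, and $\pi:\mathfrak{g}^*\to\mathfrak{pv}(f)^*$ the restriction map. Then the $\mathfrak{R}$-equivalence class of $f$ is $\mathfrak{R}(f)=\pi^{-1}\pi(f)=\{g\in\mathfrak{g}^*\mid g|_{\mathfrak{pv}(f)}=f|_{\mathfrak{pv}(f)}\}$; in particular, every $g\in\mathfrak{g}^*$ with $g|_{\mathfrak{pv}(f)}=f|_{\mathfrak{pv}(f)}$ satisfies $\mathfrak{pv}(g)=\mathfrak{pv}(f)$.
   Context: A filtration $s$ on $\mathfrak{g}$ is a chain $\mathfrak{g}=\mathfrak{g}_0\supseteq\mathfrak{g}_1\supseteq\dots\supseteq\mathfrak{g}_k=\{0\}$ of ideals of $\mathfrak{g}$ with $\dim\mathfrak{g}_{i-1}/\mathfrak{g}_i\le1$. For $f\in\mathfrak{g}^*$: $f_i=f|_{\mathfrak{g}_i}$, $\mathfrak{g}_i^{f_i}=\{x\in\mathfrak{g}_i\mid f([x,\mathfrak{g}_i])=0\}$, and $\mathfrak{pv}(f)=\sum_{i=0}^k\mathfrak{g}_i^{f_i}$ is the Vergne polarization. The equivalence relation $\mathfrak{R}$ on $\mathfrak{g}^*$: $f'\,\mathfrak{R}\,f''$ iff $\mathfrak{pv}(f')=\mathfrak{pv}(f'')$ and $f'|_{\mathfrak{pv}(f')}=f''|_{\mathfrak{pv}(f')}$; $\mathfrak{R}(f)$ denotes the class of $f$. *)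

(* Defs.v *)
(* Lie algebras are not in MathComp: a finite-dimensional
   Lie algebra over K is modelled as a vectType V over K together with a
   bracket br : V -> V -> V satisfying the Lie axioms; subspaces are
   {vspace V}; g^* is 'Hom(V, K^o). *)
From HB Require Import structures.
From mathcomp Require Import all_boot all_order all_algebra.
Set Implicit Arguments. Unset Strict Implicit. Unset Printing Implicit Defensive.
Import Order.TTheory GRing.Theory Num.Theory.
Local Open Scope ring_scope.

Section LieDefs.
Variables (K : fieldType) (V : vectType K).
Implicit Types (br : V -> V -> V) (U I : {vspace V}) (f : 'Hom(V, K^o)).

Definition is_lie_bracket br :=
  [/\ forall x, linear (br x),
      forall y, linear (fun x => br x y),
      forall x, br x x = 0
    & forall x y z, br x (br y z) + br y (br z x) + br z (br x y) = 0].

Definition lie_ideal br I := forall x y, y \in I -> br x y \in I.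

(* [U, U]: the subspace spanned by brackets of elements of U (by
   bilinearity, the span of brackets of basis vectors). *)
Definition derived br U : {vspace V} :=
  (<< allpairs br (vbasis U) (vbasis U) >>)%VS.

Definition lie_solvable br := exists n, iter n (derived br) fullv = 0%VS.

Definition is_filtration br (k : nat) (s : nat -> {vspace V}) :=
  [/\ s 0 = fullv, s k = 0%VS,
      forall i, (i <= k)%N -> lie_ideal br (s i)
    & forall i, (i < k)%N ->
        (s i.+1 <= s i)%VS /\ (\dim (s i) <= (\dim (s i.+1)).+1)%N].

(* U^{f|U} = { x in U | f([x, U]) = 0 }  (vanishing on a basis of U
   suffices by linearity of the bracket and of f). *)
Definition stab br f U : {vspace V} :=
  (U :&: \bigcap_(j < \dim U)
           lker (linfun (fun x : V => (f (br x (vbasis U)`_j) : K^o))))%VS.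

Definition vergne_pol br (k : nat) (s : nat -> {vspace V}) f : {vspace V} :=
  (\sum_(i < k.+1) stab br f (s i))%VS.

Definition equivR br k s f' f'' :=
  vergne_pol br k s f' = vergne_pol br k s f'' /\
  forall x, x \in vergne_pol br k s f' -> f' x = f'' x.

End LieDefs.

(* Main.v *)
Require Import Defs.
From HB Require Import structures.
From mathcomp Require Import all_boot all_order all_algebra.
Import GRing.Theory.
Local Open Scope ring_scope.

Module Aux.
Set Implicit Arguments. Unset Strict Implicit. Unset Printing Implicit Defensive.
Section S.
Variables (K : fieldType) (V : vectType K) (br : V -> V -> V).
Hypothesis Hlie : is_lie_bracket br.

Lemma Hr x : linear (br x). Proof. by case: Hlie. Qed.
Lemma Hl y : linear (fun x => br x y). Proof. by case: Hlie. Qed.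
Lemma Halt x : br x x = 0. Proof. by case: Hlie. Qed.
Lemma Hjac x y z : br x (br y z) + br y (br z x) + br z (br x y) = 0.
Proof. by case: Hlie. Qed.

Definition BR x : {linear V -> V} := HB.pack (br x) (GRing.isLinear.Build K V V *:%R (br x) (Hr x)).
Definition BL y : {linear V -> V} :=
  HB.pack (fun x => br x y) (GRing.isLinear.Build K V V *:%R (fun x => br x y) (Hl y)).
Lemma BRE x y : BR x y = br x y. Proof. by []. Qed.
Lemma BLE x y : BL y x = br x y. Proof. by []. Qed.

Lemma brC x y : br x y = - br y x.
Proof.
have := Halt (x + y).
rewrite -BLE linearD /= -!BRE !linearD /= !Halt add0r addr0.
by move/eqP; rewrite addr_eq0 => /eqP.
Qed.

Implicit Types h : 'Hom(V, K^o).

Lemma hlin_r h x : linear (fun y => h (br x y)).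
Proof. by move=> a u v /=; rewrite -!BRE linearP /= linearP. Qed.
Lemma hlin_l h y : linear (fun x => h (br x y)).
Proof. by move=> a u v /=; rewrite -!BLE linearP /= linearP. Qed.
Definition HR h x : {linear V -> K^o} :=
  HB.pack (fun y => h (br x y)) (GRing.isLinear.Build K V K^o *:%R _ (hlin_r h x)).
Definition HL h y : {linear V -> K^o} :=
  HB.pack (fun x => h (br x y)) (GRing.isLinear.Build K V K^o *:%R _ (hlin_l h y)).
Lemma HRE h x y : HR h x y = h (br x y). Proof. by []. Qed.
Lemma HLE h x y : HL h y x = h (br x y). Proof. by []. Qed.

Lemma hbrC h x y : h (br x y) = - h (br y x).
Proof. by rewrite brC linearN. Qed.

Lemma linfunE h (z : V) x : linfun (fun x0 : V => h (br x0 z)) x = h (br x z).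
Proof. exact: (lfunE (HL h z) x). Qed.

Lemma hDl h a b c : h (br (a + b) c) = h (br a c) + h (br b c).
Proof. by rewrite -BLE linearD /= linearD. Qed.
Lemma hDr h a b c : h (br c (a + b)) = h (br c a) + h (br c b).
Proof. by rewrite -BRE linearD /= linearD. Qed.
Lemma hBl h a b c : h (br (a - b) c) = h (br a c) - h (br b c).
Proof. by rewrite -BLE linearB /= linearB. Qed.
Lemma hBr h a b c : h (br c (a - b)) = h (br c a) - h (br c b).
Proof. by rewrite -BRE linearB /= linearB. Qed.
Lemma hZl h (a : K) b c : h (br (a *: b) c) = a * h (br b c).
Proof. by rewrite -BLE linearZ /= linearZ. Qed.
Lemma hZr h (a : K) b c : h (br c (a *: b)) = a * h (br c b).
Proof. by rewrite -BRE linearZ /= linearZ. Qed.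
Lemma h00 h a : h (br a a) = 0.
Proof. by rewrite Halt linear0. Qed.

Lemma stabP h U x :
  x \in stab br h U <-> x \in U /\ forall y, y \in U -> h (br x y) = 0.
Proof.
rewrite /stab memv_cap; split.
  case/andP=> xU; rewrite memvE => /subv_bigcapP Hc; split => //.
  move=> y yU; rewrite (coord_vbasis yU) -HRE linear_sum big1 // => j _.
  rewrite linearZ /=; have := Hc j isT; rewrite -memvE memv_ker linfunE.
  by move/eqP ->; rewrite scaler0.
case=> xU Hy; rewrite xU /= memvE; apply/subv_bigcapP => j _.
rewrite -memvE memv_ker linfunE Hy //.
by apply: vbasis_mem; apply: mem_nth; rewrite size_tuple.
Qed.

Lemma expand (U : {vspace V}) (L : {linear V -> K^o}) v : v \in U ->
  L v = \sum_(j < \dim U) coord (vbasis U) j v * L (vbasis U)`_j.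
Proof.
by move=> vU; rewrite {1}(coord_vbasis vU) linear_sum; apply: eq_bigr => j _; rewrite linearZ.
Qed.

Lemma vbasis_in (U : {vspace V}) (i : 'I_(\dim U)) : (vbasis U)`_i \in U.
Proof. by apply: vbasis_mem; apply: mem_nth; rewrite size_tuple. Qed.

Lemma riesz h (U : {vspace V}) y : (forall u, u \in stab br h U -> h (br y u) = 0) ->
  exists2 w0, w0 \in U & forall v, v \in U -> h (br w0 v) = h (br y v).
Proof.
move=> Hy.
set m := \dim U; set e := vbasis U.
pose G : 'M[K]_m := \matrix_(i, j) h (br e`_i e`_j).
pose lam : 'rV[K]_m := \row_j h (br y e`_j).
have Hsub : (lam <= G)%MS.
  rewrite submxE; apply/eqP/rowP => t; rewrite !mxE.
  pose r := \sum_j cokermx G j t *: e`_j.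
  have rU : r \in U by apply: rpred_sum => j _; apply: memvZ; apply: vbasis_in.
  have rS : r \in stab br h U.
    apply/stabP; split => // v vU; rewrite hbrC -HLE (expand (HL h r) vU).
    rewrite big1 ?oppr0 // => j _; rewrite HLE -HRE linear_sum /=.
    suff -> : \sum_i h (br e`_j (cokermx G i t *: e`_i)) = 0 by rewrite mulr0.
    have := congr1 (fun M : 'M[K]_m => M j t) (mulmx_coker G).
    rewrite !mxE => Ez; apply: (etrans _ Ez); apply: eq_bigr => l _.
    by rewrite -HRE linearZ /= [RHS]mulrC; congr (_ * _); rewrite /G mxE.
  apply: (etrans _ (Hy r rS)); rewrite -HRE linear_sum /=; apply: eq_bigr => j _.
  by rewrite -HRE linearZ /= [RHS]mulrC; congr (_ * _); rewrite /lam mxE.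
case/submxP: Hsub => D HD.
exists (\sum_i D 0 i *: e`_i).
  by apply: rpred_sum => j _; apply: memvZ; apply: vbasis_in.
move=> v vU; rewrite -!HRE (expand (HR h _) vU) (expand (HR h y) vU).
apply: eq_bigr => j _; congr (_ * _); rewrite !HRE.
have := congr1 (fun M : 'rV[K]_m => M 0 j) HD; rewrite !mxE => ->.
rewrite -(HLE h) linear_sum /=; apply: eq_bigr => i _.
by rewrite -HLE linearZ /=; congr (_ * _); rewrite /G mxE.
Qed.

Variables (k : nat) (s : nat -> {vspace V}).
Hypothesis Hfil : is_filtration br k s.

Lemma s0 : s k = 0%VS. Proof. by case: Hfil. Qed.
Lemma s_step i : (i < k)%N -> (s i.+1 <= s i)%VS /\ (\dim (s i) <= (\dim (s i.+1)).+1)%N.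
Proof. by case: Hfil => _ _ _ H; apply: H. Qed.
Lemma s_ideal i x y : (i <= k)%N -> y \in s i -> br x y \in s i.
Proof. by case: Hfil => _ _ H _ /H; apply. Qed.
Lemma s_idealL i x y : (i <= k)%N -> x \in s i -> br x y \in s i.
Proof. by move=> ik xi; rewrite brC rpredN s_ideal. Qed.

Lemma s_mono i j : (i <= j)%N -> (j <= k)%N -> (s j <= s i)%VS.
Proof.
elim: j => [|j IH] ij jk; first by move: ij; rewrite leqn0 => /eqP ->; exact: subvv.
case: (ltngtP i j.+1) ij => // [ij _|-> _]; last exact: subvv.
apply: subv_trans (IH _ (ltnW jk)); first exact: (s_step jk).1.
by rewrite -ltnS.
Qed.

Definition RR h i := stab br h (s i).
Definition TT h i := (\sum_(j < k.+1 | (i <= j)%N) RR h j)%VS.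

Lemma RR_sub h i : (RR h i <= s i)%VS. Proof. exact: capvSl. Qed.
Lemma TT_sub h i : (TT h i <= s i)%VS.
Proof.
apply/subv_sumP => j ij; apply: subv_trans (RR_sub h j) _.
by apply: s_mono => //; rewrite -ltnS.
Qed.
Lemma TT_step h i : (i <= k)%N -> TT h i = (RR h i + TT h i.+1)%VS.
Proof.
move=> ik; rewrite /TT (bigD1 (Ordinal (ik : (i < k.+1)%N))) //=.
congr (_ + _)%VS; apply: eq_bigl => j.
by rewrite -val_eqE /= [RHS]ltn_neqAle andbC eq_sym.
Qed.
Lemma TT_out h : TT h k.+1 = 0%VS.
Proof. by rewrite /TT big_pred0 // => j; rewrite leqNgt ltn_ord. Qed.
Lemma TT_mono h i j : (i <= j)%N -> (TT h j <= TT h i)%VS.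
Proof.
move=> ij; apply/subv_sumP => l jl; apply: (sumv_sup l) => //.
exact: leq_trans jl.
Qed.
Lemma pv_TT h : vergne_pol br k s h = TT h 0.
Proof. by rewrite /vergne_pol /TT; apply: eq_bigl. Qed.

Lemma brR h i l x y : (i <= l)%N -> (l <= k)%N -> x \in RR h i -> y \in RR h l ->
  br x y \in RR h l.
Proof.
move=> il lk /stabP [xi Hx] /stabP [yl Hy]; apply/stabP; split.
  exact: s_ideal.
move=> w wl.
have E : br w (br x y) = - (br x (br y w) + br y (br w x)).
  apply/eqP; rewrite -subr_eq0 opprK addrC; apply/eqP; exact: Hjac.
have E2 : h (br w (br x y)) = - (h (br x (br y w)) + h (br y (br w x))).
  by rewrite E linearN linearD.
rewrite hbrC E2 Hx ?Hy ?add0r ?oppr0 //.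
  exact: s_idealL.
by apply: (subvP (s_mono il lk)); apply: s_ideal.
Qed.

Lemma brT h i x q : (i <= k)%N -> x \in RR h i -> q \in TT h i.+1 -> br x q \in TT h i.+1.
Proof.
move=> ik xR /memv_sumP [vs Hvs ->]; rewrite -BRE linear_sum.
apply: memv_sumr => j Hj; rewrite BRE; apply: (brR (i:=i)) => //.
  exact: ltnW.
  by rewrite -ltnS ltn_ord.
exact: Hvs.
Qed.

Lemma decomp i z v : (i < k)%N -> z \in s i -> z \notin s i.+1 -> v \in s i ->
  exists2 w, w \in s i.+1 & exists c, v = w + c *: z.
Proof.
move=> ik zi zn vi.
have [sub dimle] := s_step ik.
have E : (s i.+1 + <[z]> = s i)%VS.
  apply/eqP; rewrite eqEdim subv_add sub -memvE zi /=.
  apply: leq_trans dimle _.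
  rewrite (ltn_leqif (dimv_leqif_eq (addvSl (s i.+1) <[z]>))).
  apply/negP => /eqP E; move: zn; rewrite E.
  by rewrite (subvP (addvSr _ _)) // memv_line.
move: vi; rewrite -E => /memv_addP [w wi [u /vlineP [c ->] ->]].
by exists w => //; exists c.
Qed.

Lemma selforth h n : forall i, (i + n)%N = k -> forall y, y \in s i ->
  (forall p, p \in TT h i -> h (br y p) = 0) -> y \in TT h i.
Proof.
elim: n => [|n IH] i.
  rewrite addn0 => -> y; rewrite s0 memv0 => /eqP -> _; exact: rpred0.
move=> Hn y yi Hp.
have ik : (i < k)%N by rewrite -Hn addnS ltnS leq_addr.
have Hn' : (i.+1 + n)%N = k by rewrite addSnnS.
have IH' := IH i.+1 Hn'.
rewrite (TT_step h (ltnW ik)).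
have HpQ : forall q, q \in TT h i.+1 -> h (br y q) = 0.
  by move=> q qT; apply: Hp; apply: (subvP (TT_mono h (leqnSn i))).
case: (boolP (y \in s i.+1)) => ys.
  by apply: (subvP (addvSr _ _)); apply: IH'.
case: (boolP (RR h i <= s i.+1)%VS) => HR.
  have [w0 w0s Hw0] : exists2 w0, w0 \in s i.+1 &
      forall v, v \in s i.+1 -> h (br w0 v) = h (br y v).
    apply: riesz => u uR; apply: HpQ.
    apply: (subvP (TT_mono h (leqnn i.+1))); rewrite TT_step //.
    exact: (subvP (addvSl _ _)).
  have w0i : w0 \in s i by apply: (subvP (s_step ik).1).
  have zR : y - w0 \in RR h i.
    apply/stabP; split; first by rewrite rpredB.
    move=> v vi; have [v' v's [c ->]] := decomp ik yi ys vi.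
    rewrite hDr hZr !hBl Hw0 // subrr add0r h00 sub0r hbrC opprK -Hw0 //.
    by rewrite h00 mulr0.
  move: ys; rewrite -[y](subrK w0) rpredD //.
  exact: (subvP HR).
have [z zR zn] := subvPn HR.
have zi : z \in s i by apply: (subvP (RR_sub h i)).
have [w ws [c Ey]] := decomp ik zi zn yi.
have wT : w \in TT h i.+1.
  apply: IH' => // q qT.
  have -> : w = y - c *: z by rewrite Ey addrK.
  rewrite hBl hZl HpQ //.
  move/stabP: zR => [_ ->]; first by rewrite mulr0 subrr.
  by apply: (subvP (s_step ik).1); apply: (subvP (TT_sub h i.+1)).
by rewrite Ey addrC; apply: memv_add => //; apply: memvZ.
Qed.

Lemma step h1 h2 i : (i <= k)%N -> TT h1 i.+1 = TT h2 i.+1 ->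
  (forall x, x \in TT h2 i.+1 -> h1 x = h2 x) -> (RR h2 i <= TT h1 i)%VS.
Proof.
move=> ik E Hag; apply/subvP => z zR.
have zi : z \in s i by apply: (subvP (RR_sub h2 i)).
apply: (@selforth h1 (k - i) i (subnKC ik) z zi) => p.
rewrite (TT_step h1 ik) => /memv_addP [r rR [q qT ->]].
rewrite hDr hbrC.
move/stabP: (rR) => [_ ->] //; rewrite oppr0 add0r.
have qT2 : q \in TT h2 i.+1 by rewrite -E.
rewrite Hag; last exact: brT.
move/stabP: zR => [_ ->] //.
apply: (subvP (TT_sub h2 i)); exact: (subvP (TT_mono h2 (leqnSn i))).
Qed.

Lemma mainM (f g : 'Hom(V, K^o)) : (forall x, x \in TT f 0 -> g x = f x) ->
  forall n i, (i + n)%N = k.+1 -> TT g i = TT f i.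
Proof.
move=> HA; elim=> [|n IH] i.
  by rewrite addn0 => ->; rewrite !TT_out.
move=> Hn; have ik : (i <= k)%N by rewrite -ltnS -Hn addnS ltnS leq_addr.
have E : TT g i.+1 = TT f i.+1 by apply: IH; rewrite addSnnS.
have Hag : forall x, x \in TT f i.+1 -> g x = f x.
  by move=> x xT; apply: HA; apply: (subvP (TT_mono f (leq0n i.+1))).
apply/eqP; rewrite eqEsubv; apply/andP; split.
  rewrite (TT_step g ik) subv_add; apply/andP; split.
    by apply: (step ik (esym E)) => x; rewrite E => /Hag ->.
  by rewrite E; apply: TT_mono.
rewrite (TT_step f ik) subv_add; apply/andP; split.
  exact: (step ik E Hag).
by rewrite -E; apply: TT_mono.
Qed.
End S.
End Aux.

Theorem theorem3p7 (K : fieldType) (V : vectType K) (br : V -> V -> V)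
    (k : nat) (s : nat -> {vspace V}) (f : 'Hom(V, K^o)) :
  [pchar K] =i pred0 ->
  is_lie_bracket br ->
  lie_solvable br ->
  is_filtration br k s ->
  (forall g : 'Hom(V, K^o),
      equivR br k s g f <-> (forall x, x \in vergne_pol br k s f -> g x = f x))
  /\ (forall g : 'Hom(V, K^o),
      (forall x, x \in vergne_pol br k s f -> g x = f x) ->
      vergne_pol br k s g = vergne_pol br k s f).
Proof.
move=> _ Hlie _ Hfil.
have P2 : forall g : 'Hom(V, K^o),
    (forall x, x \in vergne_pol br k s f -> g x = f x) ->
    vergne_pol br k s g = vergne_pol br k s f.
  move=> g Hg; rewrite !(Aux.pv_TT br k s).
  apply: (@Aux.mainM _ _ br Hlie k s Hfil f g _ k.+1 0); last by [].
  by move=> x; rewrite -(Aux.pv_TT br k s); apply: Hg.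
split => // g; split.
  by case=> E H x; rewrite -E; apply: H.
by move=> H; split; [exact: P2 | rewrite (P2 g H)].
Qed.
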